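(* Let $k\ge 2$, let $\mathcal{F}\subset 2^{[n]}$ be weakly $k$-cross-free, let $i\geq 0$ be an integer and let $\mathcal{F}_i=\{X\in\mathcal{F}: 2^{i}<|X|\leq 2^{i+1}\}$. If $\mathcal{A}\subset\mathcal{F}_i$ is an antichain (with respect to inclusion), then $|\mathcal{A}|\leq (k-1)n/2^{i}$.
   Context: Two sets $A,B\subset[n]$ are weakly crossing if $A\setminus B$, $B\setminus A$ and $A\cap B$ are all non-empty; a family is weakly $k$-cross-free if it does not contain $k$ pairwise weakly crossing sets. *)

(* Defs.v *)
(* Ground set [n] is modelled by 'I_n. *)
From mathcomp Require Import all_boot.
Set Implicit Arguments. Unset Strict Implicit. Unset Printing Implicit Defensive.

Definition weakly_crossing (T : finType) (A B : {set T}) : bool :=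
  [&& A :\: B != set0, B :\: A != set0 & A :&: B != set0].

Definition weakly_k_cross_free (T : finType) (k : nat) (F : {set {set T}}) : Prop :=
  ~ exists G : {set {set T}},
      [/\ G \subset F, #|G| = k &
          {in G &, forall A B, A != B -> weakly_crossing A B}].

Definition antichain (T : finType) (A : {set {set T}}) : Prop :=
  {in A &, forall X Y : {set T}, X \subset Y -> X = Y}.

Definition layer (T : finType) (F : {set {set T}}) (i : nat) : {set {set T}} :=
  [set X in F | (2 ^ i < #|X|) && (#|X| <= 2 ^ i.+1)].

(* Main.v *)
Require Import Defs.
From mathcomp Require Import all_boot.

Lemma big_subset_k (T : finType) (S : {set T}) (k : nat) :
  k <= #|S| -> exists G : {set T}, G \subset S /\ #|G| = k.
Proof.
move=> hk; exists [set X in take k (enum S)]; split.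
  apply/subsetP => X; rewrite inE => /mem_take; by rewrite mem_enum.
rewrite cardsE (card_uniqP _) ?take_uniq ?enum_uniq //.
by rewrite size_takel // -cardE.
Qed.

(* |A| <= (k-1) n / 2^i, written multiplicatively over nat. *)
Theorem claim1 (n k : nat) (F : {set {set 'I_n}}) (i : nat) (A : {set {set 'I_n}}) :
  2 <= k ->
  weakly_k_cross_free k F ->
  A \subset layer F i ->
  antichain A ->
  #|A| * 2 ^ i <= (k - 1) * n.
Proof.
move=> hk hF hA hanti.
have H1 : forall x : 'I_n, #|[set X in A | x \in X]| <= k - 1.
  move=> x; rewrite leqNgt; apply/negP => hlt.
  have hk' : k <= #|[set X in A | x \in X]| by rewrite -(subnK (ltnW hk)) addn1.

  have [G [hGS hGk]] := @big_subset_k _ _ _ hk'.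
  apply: hF; exists G; split => //.
    apply/subsetP => X /(subsetP hGS); rewrite inE => /andP[/(subsetP hA)].
    by rewrite inE => /andP[].
  move=> X Y /(subsetP hGS) + /(subsetP hGS); rewrite !inE => /andP[XA xX] /andP[YA xY] hXY.
  apply/and3P; split.
  - rewrite setD_eq0; apply/negP => sXY; move/eqP: hXY; apply; exact: hanti.
  - rewrite setD_eq0; apply/negP => sYX; move/eqP: hXY; apply; apply/esym; exact: hanti.
  - by apply/set0Pn; exists x; rewrite inE xX xY.
have H2 : \sum_(X in A) #|X| = \sum_(x : 'I_n) #|[set X in A | x \in X]|.
  transitivity (\sum_(X in A) \sum_(x : 'I_n | x \in X) 1).
    by apply: eq_bigr => X _; rewrite sum1_card.
  rewrite (exchange_big_dep predT) //=.
  apply: eq_bigr => x _; rewrite -sum1_card; apply: eq_bigl => X; by rewrite inE.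
have H3 : #|A| * 2 ^ i <= \sum_(X in A) #|X|.
  rewrite -sum_nat_const; apply: leq_sum => X XA.
  move: (subsetP hA X XA); rewrite inE => /andP[_ /andP[h _]]; exact: ltnW.
apply: (leq_trans H3); rewrite H2.
apply: (@leq_trans (\sum_(x : 'I_n) (k - 1))).
  exact: leq_sum.
by rewrite sum_nat_const card_ord mulnC.
Qed.
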